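(* Let $F$ be a field of characteristic zero, $G$ a finite group, and $A$, $B$ $G$-graded PI-algebras over $F$ such that $T_G(A)=T_G(B)$. Then for all positive integers $d_1,\dots,d_m$, \[T_G(UT(d_1,\dots,d_m;A))=T_G(UT(d_1,\dots,d_m;B)).\] Consequently, for every $n\in\mathbb{N}$, $T_G(M_n(A))=T_G(M_n(B))$.
   Context: All algebras are associative and unitary. $F\langle X\rangle$ is the free associative algebra on $X=\bigcup_{g\in G}X^g$ (disjoint countable sets of variables of degree $g$), graded by $G$ in the natural way. For a $G$-graded algebra $A=\bigoplus_gA^g$, $T_G(A)$ is the ideal of graded polynomial identities of $A$, i.e. graded polynomials $f(x_1,\dots,x_t)$ with $f(a_1,\dots,a_t)=0$ for all $a_i\in A^{\deg(x_i)}$. $UT(d_1,\dots,d_m;A)$ is the algebra of block upper-triangular matrices in $M_{d_1+\cdots+d_m}(A)$ with $(r,s)$ block ($r\le s$) an arbitrary $d_r\times d_s$ matrix over $A$ and zero blocks below the diagonal; it and $M_n(A)$ are $G$-graded by letting the degree-$g$ component consist of matrices all of whose entries lie in $A^g$. *)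

(* Defs.v *)
From HB Require Import structures.
From mathcomp Require Import all_boot all_order all_algebra all_fingroup.
From mathcomp Require Import finmap.
Set Implicit Arguments. Unset Strict Implicit. Unset Printing Implicit Defensive.
Import GRing.Theory.
Local Open Scope ring_scope.

Section Defs.
Variable F : fieldType.

(* Elements of the free associative unital algebra F<V> on a set of variables V:
   finitely supported functions from words (seq V) to F.  The empty word is 1. *)
Definition freealg (V : choiceType) := {fsfun seq V -> F with 0%R}.

Definition peval (V : choiceType) (R : pzRingType) (s : F -> R -> R)
  (sigma : V -> R) (f : freealg V) : R :=
  \sum_(w <- finsupp f) s (f w) (\prod_(x <- w) sigma x).

(* G-graded variables: x^g_k is (g, k). *)
Definition gpoly (gT : finGroupType) := freealg (gT * nat)%type.

Definition is_gid (gT : finGroupType) (R : pzRingType) (s : F -> R -> R)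
  (hom : gT -> R -> Prop) (f : gpoly gT) : Prop :=
  forall sigma : gT * nat -> R, (forall g k, hom g (sigma (g, k))) ->
    peval s sigma f = 0.

Record grading (gT : finGroupType) (A : algType F) := Grading {
  comp :> gT -> A -> Prop;
  comp0 : forall g, comp g 0;
  compD : forall g (c : F) (a b : A), comp g a -> comp g b -> comp g (c *: a + b);
  comp_sum : forall a : A, exists f : gT -> A,
      (forall g, comp g (f g)) /\ a = \sum_(g : gT) f g;
  comp_direct : forall f : gT -> A,
      (forall g, comp g (f g)) -> \sum_(g : gT) f g = 0 -> forall g, f g = 0;
  compM : forall g h (a b : A), comp g a -> comp h b -> comp (g * h)%g (a * b)
}.

Definition TG (gT : finGroupType) (A : algType F) (GA : grading gT A) :
  gpoly gT -> Prop := is_gid (R := A) *:%R GA.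

Definition PI (A : algType F) : Prop :=
  exists f : freealg nat, (exists w, f w != 0) /\
    forall sigma : nat -> A, peval *:%R sigma f = 0.

Definition mxscale (A : algType F) (n : nat) (c : F) (M : 'M[A]_n) : 'M[A]_n :=
  map_mx (fun a => c *: a) M.

(* block index (0-based) of the row/column index i for block sizes d *)
Definition blk (d : seq nat) (i : nat) : nat :=
  count (fun k => sumn (take k.+1 d) <= i)%N (iota 0 (size d)).

(* UT(d_1,...,d_m; A) as a subset of M_{d_1+...+d_m}(A) *)
Definition is_blockUT (A : algType F) (d : seq nat) (M : 'M[A]_(sumn d)) : Prop :=
  forall i j : 'I_(sumn d), (blk d j < blk d i)%N -> M i j = 0.

Definition UT_hom (gT : finGroupType) (A : algType F) (GA : grading gT A)
  (d : seq nat) (g : gT) (M : 'M[A]_(sumn d)) : Prop :=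
  is_blockUT M /\ forall i j, GA g (M i j).

Definition TG_UT (gT : finGroupType) (A : algType F) (GA : grading gT A)
  (d : seq nat) : gpoly gT -> Prop :=
  is_gid (@mxscale A (sumn d)) (@UT_hom gT A GA d).

Definition M_hom (gT : finGroupType) (A : algType F) (GA : grading gT A)
  (n : nat) (g : gT) (M : 'M[A]_n) : Prop := forall i j, GA g (M i j).

Definition TG_M (gT : finGroupType) (A : algType F) (GA : grading gT A)
  (n : nat) : gpoly gT -> Prop :=
  is_gid (@mxscale A n) (@M_hom gT A GA n).

End Defs.

(* Main.v *)
Require Import Defs.
From HB Require Import structures.
From mathcomp Require Import all_boot all_order all_algebra all_fingroup.
From mathcomp Require Import finmap.
Set Implicit Arguments. Unset Strict Implicit. Unset Printing Implicit Defensive.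
Import GRing.Theory.
Local Open Scope ring_scope.

Section Poly.
Variables (F : fieldType) (V : choiceType).

Lemma peval_on (R : algType F) (sigma : V -> R) (f : freealg F V) (S : seq (seq V)) :
  uniq S -> {subset finsupp f <= S} ->
  peval *:%R sigma f = \sum_(w <- S) f w *: \prod_(x <- w) sigma x.
Proof.
move=> uS sub; rewrite /peval [RHS](bigID (fun w => w \in finsupp f)) /=.
rewrite [X in _ + X]big1 ?addr0; last first.
  by move=> w /fsfun_dflt ->; rewrite scale0r.
rewrite -[RHS]big_filter; apply: perm_big; apply: uniq_perm.
- exact: fset_uniq.
- exact: filter_uniq.
by move=> w; rewrite mem_filter; case: (boolP (w \in finsupp f)) => // /sub ->.
Qed.

Definition mkpoly (L : seq (F * seq V)) : freealg F V :=
  [fsfun w in (seq_fset tt (map snd L)) => \sum_(p <- L | p.2 == w) p.1 | 0].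

Lemma peval_mkpoly (R : algType F) (sigma : V -> R) L :
  peval *:%R sigma (mkpoly L) = \sum_(p <- L) p.1 *: \prod_(x <- p.2) sigma x.
Proof.
rewrite (@peval_on _ _ _ (undup (map snd L))) ?undup_uniq //; last first.
  move=> w; rewrite mem_finsupp mem_undup /mkpoly fsfunE.
  by rewrite seq_fsetE; case: ifP => // _; rewrite eqxx.
transitivity (\sum_(w <- undup (map snd L)) \sum_(p <- L | p.2 == w)
     p.1 *: \prod_(x <- p.2) sigma x).
  apply: eq_big_seq => w; rewrite mem_undup => wL.
  rewrite /mkpoly fsfunE seq_fsetE wL scaler_suml.
  by apply: eq_bigr => p /eqP ->.
rewrite (exchange_big_dep xpredT) //=.
apply: eq_big_seq => p pL; rewrite big_mkcond /=.
have pL' : p.2 \in undup [seq i.2 | i <- L] by rewrite mem_undup map_f.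
rewrite (bigD1_seq (p.2) pL' (undup_uniq _)) eqxx.
rewrite [\big[_/_]_(i <- _ | i != p.2) _]big1; first exact: addr0.
by move=> w; rewrite eq_sym => /negPf ->.
Qed.
End Poly.

Section Mat.
Variables (F : fieldType) (gT : finGroupType) (N : nat) (ok : rel 'I_N).
Definition code (k : nat) (a b : 'I_N) : nat := choice.pickle (k, a, b).

Fixpoint paths (w : seq (gT * nat)) (i j : 'I_N) : seq (seq (gT * nat)) :=
  match w with
  | [::] => if i == j then [:: [::]] else [::]
  | x :: w' => flatten [seq [seq (x.1, code x.2 i a) :: u | u <- paths w' a j]
                       | a <- [seq a <- enum 'I_N | ok i a]]
  end.

Lemma prod_entry (A : algType F) (sigma : gT * nat -> 'M[A]_N) (tau : gT * nat -> A)
  (H : forall g k a b, sigma (g, k) a b = if ok a b then tau (g, code k a b) else 0)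
  w i j :
  (\prod_(x <- w) sigma x) i j = \sum_(u <- paths w i j) \prod_(y <- u) tau y.
Proof.
elim: w i j => [|[g k] w IH] i j /=.
  rewrite big_nil !mxE; case: eqP => _; rewrite ?big_seq1 ?big_nil //.
rewrite big_cons !mxE big_flatten big_map big_filter /= big_enum_cond /=.
rewrite [RHS]big_mkcond; apply: eq_bigr => a _; rewrite H.
case: (ok i a); last by rewrite mul0r.
by rewrite IH mulr_sumr big_map; apply: eq_bigr => u _; rewrite big_cons.
Qed.

Definition Lst (f : gpoly F gT) (i j : 'I_N) : seq (F * seq (gT * nat)) :=
  flatten [seq [seq (f w, u) | u <- paths w i j] | w <- finsupp f].
Definition Pe (f : gpoly F gT) i j : gpoly F gT := mkpoly (Lst f i j).

Lemma peval_entry (A : algType F) (sigma : gT * nat -> 'M[A]_N) (tau : gT * nat -> A)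
  (H : forall g k a b, sigma (g, k) a b = if ok a b then tau (g, code k a b) else 0)
  f i j : peval (@mxscale F A N) sigma f i j = peval *:%R tau (Pe f i j).
Proof.
rewrite peval_mkpoly /peval summxE /Lst big_flatten big_map.
apply: eq_bigr => w _; rewrite mxE (prod_entry H) scaler_sumr big_map.
by apply: eq_bigr.
Qed.

Definition homM (A : algType F) (GA : grading gT A) g (M : 'M[A]_N) : Prop :=
  (forall a b, ~~ ok a b -> M a b = 0) /\ forall a b, GA g (M a b).

Lemma key (A : algType F) (GA : grading gT A) f :
  is_gid (@mxscale F A N) (homM GA) f <-> forall i j, TG GA (Pe f i j).
Proof.
split.
- move=> Hf i j tau Htau.
  pose sigma (x : gT * nat) : 'M[A]_N :=
    \matrix_(a, b) if ok a b then tau (x.1, code x.2 a b) else 0.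
  have H : forall g k a b, sigma (g, k) a b = if ok a b then tau (g, code k a b) else 0.
    by move=> g k a b; rewrite mxE.
  rewrite -(peval_entry H) Hf ?mxE // => g k; split=> a b; rewrite mxE.
    by move/negPf ->.
  by case: (ok a b); [apply: Htau | apply: comp0].
- move=> Hf sigma Hs.
  pose tau (x : gT * nat) : A :=
    if choice.unpickle x.2 is Some (k, a, b) then sigma (x.1, k) a b else 0.
  have H : forall g k a b, sigma (g, k) a b = if ok a b then tau (g, code k a b) else 0.
    move=> g k a b; rewrite /tau /code choice.pickleK /=.
    by case: (boolP (ok a b)) => // /(proj1 (Hs g k) a b).
  apply/matrixP => i j; rewrite (peval_entry H) mxE; apply: Hf => g m.
  rewrite /tau /=; case: (choice.unpickle m) => [[[k a] b]|]; last exact: comp0.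
  exact: (proj2 (Hs g k)).
Qed.
End Mat.

Lemma is_gid_ext (F : fieldType) (gT : finGroupType) (R : pzRingType) (s : F -> R -> R)
  (h1 h2 : gT -> R -> Prop) : (forall g M, h1 g M <-> h2 g M) ->
  forall f, is_gid s h1 f <-> is_gid s h2 f.
Proof.
move=> E f; split=> Hf sigma Hs; apply: Hf => g k; apply/E; exact: Hs.
Qed.

Theorem lemma5p3 (F : fieldType) (gT : finGroupType) (A B : algType F)
  (GA : grading gT A) (GB : grading gT B) :
  [pchar F] =i pred0 -> PI A -> PI B ->
  (forall f, TG GA f <-> TG GB f) ->
  (forall d : seq nat, (0 < size d)%N -> all (fun k => 0 < k)%N d ->
     forall f, TG_UT GA d f <-> TG_UT GB d f)
  /\ (forall n : nat, forall f, TG_M GA n f <-> TG_M GB n f).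
Proof.
move=> _ _ _ EAB; split.
- move=> d _ _ f.
  pose ok := fun a b : 'I_(sumn d) => ~~ (blk d b < blk d a)%N.
  have E (C : algType F) (GC : grading gT C) :
      forall g M, @UT_hom F gT C GC d g M <-> homM ok GC g M.
    move=> g M; rewrite /UT_hom /homM /is_blockUT /ok; split=> -[h1 h2]; split=> // a b.
      by rewrite negbK; apply: h1.
    by move=> lt; apply: h1; rewrite negbK.
  rewrite /TG_UT (is_gid_ext _ (E _ GA)) (is_gid_ext _ (E _ GB)) !key.
  by split=> h i j; apply/EAB.
- move=> n f.
  pose ok := fun a b : 'I_n => true.
  have E (C : algType F) (GC : grading gT C) :
      forall g M, M_hom GC g M <-> homM ok GC g M.
    by move=> g M; rewrite /M_hom /homM /ok; split=> [h|[]//]; split.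
  rewrite /TG_M (is_gid_ext _ (E _ GA)) (is_gid_ext _ (E _ GB)) !key.
  by split=> h i j; apply/EAB.
Qed.
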